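(* Let $r\ge 1$, let $a_1,\dots,a_r\ge 2$ be integers, and let $G,H,H_1,\dots,H_r$ be graphs. If $G \rightarrow (a_1,\dots,a_r)^v$ and $H \rightarrow (H_1,\dots,H_r)^v$, then $G[H] \rightarrow (K_{a_1}[H_1],\dots,K_{a_r}[H_r])^v$.
   Context: All graphs are finite and simple. ''A graph $F$ contains a graph $H$'' means $F$ has a (not necessarily induced) subgraph isomorphic to $H$. An integer $a$ used in place of a graph denotes the complete graph $K_a$. For graphs $G,H_1,\dots,H_r$ write $G\rightarrow(H_1,\dots,H_r)^v$ if for every partition $V(G)=X_1\cup\dots\cup X_r$ (i.e. every $r$-coloring of the vertices) there is an $i$ such that the subgraph of $G$ induced by $X_i$ contains $H_i$. The lexicographic product $G[H]$ has vertex set $V(G)\times V(H)$, with $\{(u_1,v_1),(u_2,v_2)\}$ an edge iff $\{u_1,u_2\}\in E(G)$, or $u_1=u_2$ and $\{v_1,v_2\}\in E(H)$. *)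

(* Defs.v *)
From mathcomp Require Import all_boot.
Set Implicit Arguments. Unset Strict Implicit. Unset Printing Implicit Defensive.

Record sgraph := SGraph {
  vert :> finType;
  adj : rel vert;
  adj_sym : symmetric adj;
  adj_irr : irreflexive adj }.

Definition Kadj (a : nat) : rel 'I_a := fun i j => i != j.
Lemma Kadj_sym a : symmetric (@Kadj a).
Proof. by move=> i j; rewrite /Kadj eq_sym. Qed.
Lemma Kadj_irr a : irreflexive (@Kadj a).
Proof. by move=> i; rewrite /Kadj eqxx. Qed.
Definition complete (a : nat) : sgraph := SGraph (@Kadj_sym a) (@Kadj_irr a).

Definition lexadj (G H : sgraph) : rel (G * H)%type :=
  fun u v => adj u.1 v.1 || ((u.1 == v.1) && adj u.2 v.2).
Lemma lexadj_sym G H : symmetric (@lexadj G H).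
Proof. by move=> u v; rewrite /lexadj adj_sym eq_sym (adj_sym u.2). Qed.
Lemma lexadj_irr G H : irreflexive (@lexadj G H).
Proof. by move=> u; rewrite /lexadj !adj_irr andbF. Qed.
Definition lexprod (G H : sgraph) : sgraph :=
  SGraph (@lexadj_sym G H) (@lexadj_irr G H).

(* the subgraph of F induced by X contains H: an injective edge-preserving
   map from H into X (not necessarily induced copy) *)
Definition contains_in (F : sgraph) (X : {pred F}) (H : sgraph) : Prop :=
  exists f : H -> F, [/\ injective f, forall x, f x \in X &
                          forall x y, adj x y -> adj (f x) (f y)].

Definition varrow (G : sgraph) (r : nat) (Hs : 'I_r -> sgraph) : Prop :=
  forall col : G -> 'I_r,
    exists i : 'I_r, contains_in [pred x | col x == i] (Hs i).

(* Main.v *)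
Require Import Defs.
From mathcomp Require Import all_boot.
From Stdlib Require Import ClassicalEpsilon.

Theorem mainTheorem1 (r : nat) (a : 'I_r -> nat) (G H : sgraph)
    (Hs : 'I_r -> sgraph) :
  1 <= r ->
  (forall i, 2 <= a i) ->
  varrow G (fun i => complete (a i)) ->
  varrow H Hs ->
  varrow (lexprod G H) (fun i => lexprod (complete (a i)) (Hs i)).
Proof.
move=> _ _ hG hH col.
pose P (g : G) (i : 'I_r) := contains_in [pred y : H | col (g, y) == i] (Hs i).
have ex : forall g : G, exists i, P g i by move=> g; exact: (hH (fun y => col (g, y))).
pose c (g : G) := proj1_sig (constructive_indefinite_description _ (ex g)).
have Pc : forall g, P g (c g).
  by move=> g; rewrite /c; case: constructive_indefinite_description.
have [i [phi [phiI phiC phiE]]] := hG c.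
have Pi : forall x, P (phi x) i.
  by move=> x; have := phiC x; rewrite inE => /eqP <-.
pose f (x : complete (a i)) := proj1_sig (constructive_indefinite_description _ (Pi x)).
have fP : forall x, [/\ injective (f x), forall y, f x y \in [pred y : H | col (phi x, y) == i]
            & forall y z, adj y z -> adj (f x y) (f x z)].
  by move=> x; rewrite /f; case: constructive_indefinite_description.
exists i; exists (fun u => (phi u.1, f u.1 u.2)); split.
- move=> [x y] [x' y'] /= [] /phiI exx'; subst x'; have [fI _ _] := fP x; by move=> /fI ->.
- move=> [x y] /=; rewrite inE; have [_ h _] := fP x; have := h y; by rewrite inE.
- move=> [x y] [x' y']; rewrite /= /lexadj /=.
  case/orP => [hxx'|/andP [/eqP exx' hyy']].
  + by rewrite phiE.
  + subst x'; rewrite eqxx /=; have [_ _ h] := fP x; rewrite (h _ _ hyy') orbT //.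
Qed.
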